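(* Let $m\ge3$, let $E^m$ and $O^m$ be the sets of even-parity and odd-parity $m$-bit strings, and let $A\subseteq E^m$. For $n\ge1$, let $m$ parties (the first being Alice) hold $X_j=(x^j_1,\dots,x^j_n)\in\{0,1\}^n$, $j=1,\dots,m$, under the promise that $x_i^1x_i^2\cdots x_i^m\in A\cup O^m$ for every $i$, and let $g_A(X_1,\dots,X_m)=\bigoplus_{i=1}^n t_A(x_i^1\cdots x_i^m)$, where $t_A(w)=1$ if $w\in A$ and $0$ otherwise. Then $g_A$ can be computed by a distributed protocol using only local classical operations, no a priori quantum entanglement, and $m-1$ classical bits of communication in total, at the end of which Alice knows the value of $g_A(X_1,\dots,X_m)$. *)

(* Defs.v *)
From mathcomp Require Import all_boot.
Set Implicit Arguments. Unset Strict Implicit. Unset Printing Implicit Defensive.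

Notation bitstring m := {ffun 'I_m -> bool}.

Definition parity m (w : bitstring m) : bool := \big[addb/false]_(j < m) w j.

Definition even_strings m : {set bitstring m} := [set w | ~~ parity w].
Definition odd_strings  m : {set bitstring m} := [set w | parity w].

(* inputs: party j (j : 'I_m) holds X j = (x^j_1, ..., x^j_n) *)
Definition inputs m n := 'I_m -> 'I_n -> bool.

Definition column m n (X : inputs m n) (i : 'I_n) : bitstring m :=
  [ffun j => X j i].

Definition t_A m (A : {set bitstring m}) (w : bitstring m) : bool := w \in A.

Definition g_A m n (A : {set bitstring m}) (X : inputs m n) : bool :=
  \big[addb/false]_(i < n) t_A A (column X i).

Definition promise m n (A : {set bitstring m}) (X : inputs m n) : Prop :=
  forall i : 'I_n, column X i \in A :|: odd_strings m.

(* A round: a sender transmits ONE classical bit to a receiver; the bit is a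
   function (local classical computation) of the sender's own input and of the
   sequence of bits the sender has received so far.  No shared entanglement
   (nor shared randomness) is available. *)
Record round (m n : nat) := Round {
  sender   : 'I_m;
  receiver : 'I_m;
  message  : ('I_n -> bool) -> seq bool -> bool }.

Record protocol (m n : nat) := Protocol {
  rounds : seq (round m n);
  output : ('I_n -> bool) -> seq bool -> bool }.

(* views: for each party, the sequence of bits it has received so far *)
Definition step m n (X : inputs m n) (v : 'I_m -> seq bool) (r : round m n)
  : 'I_m -> seq bool :=
  let b := message r (X (sender r)) (v (sender r)) in
  fun j => if j == receiver r then rcons (v j) b else v j.

Definition run m n (P : protocol m n) (X : inputs m n) : 'I_m -> seq bool :=
  foldl (step X) (fun _ => [::]) (rounds P).

(* total classical communication = number of bits sent *)
Definition cost m n (P : protocol m n) : nat := size (rounds P).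

Definition computes_for m n (P : protocol m n) (a : 'I_m)
  (Q : inputs m n -> Prop) (f : inputs m n -> bool) : Prop :=
  forall X : inputs m n, Q X -> output P (X a) (run P X a) = f X.

(* Main.v *)
Require Import Defs.
From mathcomp Require Import all_boot.

Definition rowxor {n} (x : 'I_n -> bool) := \big[addb/false]_(i < n) x i.

Lemma run_gen m n (X : inputs m n) (r0 : 'I_m) (s : seq 'I_m) v :
  foldl (step X) v [seq @Round m n j r0 (fun x _ => rowxor x) | j <- s] r0
  = v r0 ++ [seq rowxor (X j) | j <- s].
Proof.
elim: s v => [|j s IH] v /=; first by rewrite cats0.
rewrite IH /step /= eqxx -cats1 -catA //.
Qed.

Lemma big_negb n (f : 'I_n -> bool) :
  \big[addb/false]_(i < n) ~~ f i = odd n (+) \big[addb/false]_(i < n) f i.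
Proof.
elim: n f => [|n IH] f; first by rewrite !big_ord0.
rewrite !big_ord_recr /= IH.
by case: (odd n); case: (f ord_max); case: (\big[addb/false]_(i < n) f (widen_ord (leqnSn n) i)).
Qed.

Theorem theorem7 (m : nat) (hm : 3 <= m)
  (A : {set {ffun 'I_m -> bool}}) (hA : A \subset even_strings m)
  (n : nat) (hn : 1 <= n) :
  exists P : protocol m n,
    cost P = m - 1 /\
    forall alice : 'I_m, nat_of_ord alice = 0 ->
      computes_for P alice (promise A) (g_A A).
Proof.
have h0 : 0 < m by apply: leq_trans hm.
pose r0 : 'I_m := Ordinal h0.
pose s := [seq j <- enum 'I_m | j != r0].
exists (Protocol [seq @Round m n j r0 (fun x _ => rowxor x) | j <- s]
          (fun x bs => odd n (+) rowxor x (+) \big[addb/false]_(b <- bs) b)).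
split.
  rewrite /cost /= size_map size_filter.
  have := cardC1 r0; rewrite card_ord cardE subn1 => <-.
  by rewrite /enum_mem size_filter count_filter; apply: eq_count => x; rewrite !inE andbT.
move=> alice ha X hX.
have -> : alice = r0 by apply: val_inj.
rewrite /= /run /= run_gen /= big_map.
rewrite big_filter big_enum_cond /=.
have -> : \big[addb/false]_(j in 'I_m | j != r0) rowxor (X j)
   = rowxor (X r0) (+) \big[addb/false]_(j < m) rowxor (X j).
  rewrite [in RHS](bigD1 r0) //=.
  by case: (rowxor (X r0)); case: (\big[addb/false]_(i | i != r0) rowxor (X i)).
rewrite -addbA addKb /g_A /rowxor.
rewrite exchange_big /=.
rewrite -big_negb; apply: eq_bigr => i _.
rewrite /t_A.
have pe : parity (column X i) = \big[addb/false]_(j < m) X j i.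
  by apply: eq_bigr => j _; rewrite ffunE.
have := hX i; rewrite in_setU /odd_strings inE pe.
case hi: (column X i \in A) => /=.
  by have := subsetP hA _ hi; rewrite /even_strings inE pe => /negbTE ->.
by move=> ->.
Qed.
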